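(* Consider a PWA system, as defined in the context, satisfying (A1)–(A6) with known global dynamical relative degree $\mu=2$. Then its inverse is given by the explicit, anticausal PWA system $x_{k+1}=\overline{\mathbf{A}}_k x_k+\overline{\mathbf{B}}_k y_{k+2}+\overline{\mathbf{F}}_k$, $u_k=\overline{\mathbf{C}}_k x_k+\overline{\mathbf{D}}_k y_{k+2}+\overline{\mathbf{G}}_k$, where $\overline{\mathbf{D}}_k=(C_{k+2}\mathbf{A}_{k+1}\mathbf{B}_k)^{-1}$, $\overline{\mathbf{C}}_k=-\overline{\mathbf{D}}_kC_{k+2}\mathbf{A}_{k+1}\mathbf{A}_k$, $\overline{\mathbf{G}}_k=-\overline{\mathbf{D}}_k(C_{k+2}\mathbf{A}_{k+1}\mathbf{F}_k+C_{k+2}\mathbf{F}_{k+1}+G_{k+2})$, $\overline{\mathbf{A}}_k=\mathbf{A}_k+\mathbf{B}_k\overline{\mathbf{C}}_k$, $\overline{\mathbf{B}}_k=\mathbf{B}_k\overline{\mathbf{D}}_k$, $\overline{\mathbf{F}}_k=\mathbf{F}_k+\mathbf{B}_k\overline{\mathbf{G}}_k$; here the location at time $k+1$ (which determines $\mathbf{A}_{k+1}$ and $\mathbf{F}_{k+1}$) does not depend on $u_k$.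
   Context: A discrete-time piecewise affine (PWA) system is $x_{k+1}=\mathbf{A}_k x_k+\mathbf{B}_k u_k+\mathbf{F}_k$, $y_k=\mathbf{C}_k x_k+\mathbf{D}_k u_k+\mathbf{G}_k$, $k\in\mathbb{Z}$, with state $x_k\in\mathbb{R}^{n_x}$, input $u_k\in\mathbb{R}^{n_u}$, output $y_k\in\mathbb{R}^{n_y}$. For each $M\in\{A,B,F,C,D,G\}$, $\mathbf{M}_k=\sum_{q=1}^{|Q|} M_{q,k}K_q(\delta_k)$, where the $M_{q,k}$ are real matrices (possibly time-varying), $\delta_k=\delta(x_k)=H(Px_k-\theta)$ with $H$ the elementwise Heaviside step function, $P\in\mathbb{R}^{n_P\times n_x}$, $\theta\in\mathbb{R}^{n_P}$, and $K_q(\delta)=1$ if $\delta\in\Delta^*_q$ and $0$ otherwise ($\Delta^*_q$ a set of binary vectors). The locations $Q_q=\{x:\delta(x)\in\Delta^*_q\}$ are disjoint, have union $\mathbb{R}^{n_x}$, and each is a union of disjoint convex polytopes. The $q$-th component model is the affine system with matrices $A_{q,k},\dots,G_{q,k}$ and relative degree $\mu_q$ (number of time steps for an input value to influence the output). Global dynamical relative degree: the smallest integer $\mu\ge 0$ such that the explicit expression of $y_{k+\mu}$ in terms of the component matrices, the selector functions $K_q$, $x_k$ and $u_i$ ($i\ge k$) contains $u_k$ outside of a selector function for every switching sequence on time steps $k,\dots,k+\mu$. Assumptions: (A1) $x_0$ lies in the set of initial conditions from which every location is reachable in finite time; (A2) single-input single-output; (A3) switching depends only on the state, not the input; (A4)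 all component models have the same relative degree $\mu_c$ for all $q$ and $k$; (A5) $\mathbf{C}_k=C_k$, $\mathbf{D}_k=D_k$, $\mathbf{G}_k=G_k$, identical for all locations and known for all $k$; (A6) output-based switching with time-invariant output function: $P=P_o\mathbf{C}_k$ and $\theta=\theta_o-P_o\mathbf{G}_k$ with $\mathbf{C}_k=C$, $\mathbf{G}_k=G$ for all $k$, where $P_o,\theta_o$ contain orientation vectors and offsets of hyperplanes in the output space. The inverse is explicit in that $u_k$ and $x_{k+1}$ are computable directly from $x_k$ and $y_{k+2}$; it is anticausal since $u_k$ depends on the future output $y_{k+2}$. *)

(* Defs.v *)
From HB Require Import structures.
From mathcomp Require Import all_boot all_order all_algebra.
Set Implicit Arguments. Unset Strict Implicit. Unset Printing Implicit Defensive.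
Import Order.TTheory GRing.Theory Num.Theory.
Local Open Scope ring_scope.

(* Discrete-time SISO piecewise affine system with |Q| locations,
   state dimension nx, nP switching hyperplanes.  Time k : nat.
   (A2) SISO: input/output dimension 1.
   (A5) C_k, D_k, G_k are common to all locations (built into the data). *)
Record pwa (R : realFieldType) (Q : finType) (nx nP : nat) := PWA {
  pA : Q -> nat -> 'M[R]_nx;
  pB : Q -> nat -> 'M[R]_(nx, 1);
  pF : Q -> nat -> 'cV[R]_nx;
  pC : nat -> 'M[R]_(1, nx);
  pD : nat -> 'M[R]_1;
  pG : nat -> 'cV[R]_1;
  pP : 'M[R]_(nP, nx);
  ptheta : 'cV[R]_nP;
  pDelta : Q -> {set 'cV[bool]_nP}
}.

Section PWA.
Variables (R : realFieldType) (Q : finType) (nx nP : nat) (S : pwa R Q nx nP).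

Definition delta (x : 'cV[R]_nx) : 'cV[bool]_nP :=
  \col_i (0 <= (pP S *m x - ptheta S) i 0).

Definition K (q : Q) (d : 'cV[bool]_nP) : bool := d \in pDelta S q.

Definition bold (a b : nat) (M : Q -> nat -> 'M[R]_(a, b)) (k : nat)
    (x : 'cV[R]_nx) : 'M[R]_(a, b) :=
  \sum_(q : Q) (K q (delta x) : nat)%:R *: M q k.

Definition step (k : nat) (x : 'cV[R]_nx) (u : 'cV[R]_1) : 'cV[R]_nx :=
  bold (pA S) k x *m x + bold (pB S) k x *m u + bold (pF S) k x.

Definition output (k : nat) (x : 'cV[R]_nx) (u : 'cV[R]_1) : 'cV[R]_1 :=
  pC S k *m x + pD S k *m u + pG S k.

Definition is_traj (x : nat -> 'cV[R]_nx) (u y : nat -> 'cV[R]_1) : Prop :=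
  forall k, x k.+1 = step k (x k) (u k) /\ y k = output k (x k) (u k).

Fixpoint traj (x0 : 'cV[R]_nx) (u : nat -> 'cV[R]_1) (k : nat) : 'cV[R]_nx :=
  match k with
  | 0 => x0
  | k'.+1 => step k' (traj x0 u k') (u k')
  end.

Definition locations_partition : Prop :=
  forall x : 'cV[R]_nx, exists! q : Q, K q (delta x).

Definition reaches_all (x0 : 'cV[R]_nx) : Prop :=
  forall q : Q, exists (u : nat -> 'cV[R]_1) (N : nat), K q (delta (traj x0 u N)).

(* Transition along a switching sequence s (s i = location active at time i):
   stt s k j = A_{s(k+j),k+j} ... A_{s(k+1),k+1}  (identity for j = 0). *)
Fixpoint stt (s : nat -> Q) (k j : nat) : 'M[R]_nx :=
  match j with
  | 0 => 1%:M
  | j'.+1 => pA S (s (k + j)) (k + j) *m stt s k j'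
  end.

(* coefficient of u_k in the explicit expression of y_{k+j}, for the
   switching sequence s on time steps k, ..., k+j *)
Definition markov (s : nat -> Q) (k j : nat) : 'M[R]_1 :=
  match j with
  | 0 => pD S k
  | j'.+1 => pC S (k + j) *m stt s k j' *m pB S (s k) k
  end.

Definition comp_reldeg (q : Q) (k mu : nat) : Prop :=
  markov (fun _ => q) k mu != 0 /\
  (forall j, (j < mu)%N -> markov (fun _ => q) k j = 0).

(* global dynamical relative degree: smallest mu such that, for every time k
   and every switching sequence, y_{k+mu} contains u_k (nonzero coefficient) *)
Definition glob_reldeg (mu : nat) : Prop :=
  (forall k (s : nat -> Q), markov s k mu != 0) /\
  (forall j, (j < mu)%N -> ~ (forall k (s : nat -> Q), markov s k j != 0)).

(* u_k-free prediction of x_{k+1}; determines the location at k+1 *)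
Definition xpred (k : nat) (x : 'cV[R]_nx) : 'cV[R]_nx :=
  bold (pA S) k x *m x + bold (pF S) k x.

Definition A1 k x := bold (pA S) k.+1 (xpred k x).
Definition F1 k x := bold (pF S) k.+1 (xpred k x).

Definition CAB k x : 'M[R]_1 := pC S k.+2 *m A1 k x *m bold (pB S) k x.

Definition Dbar k x : 'M[R]_1 := invmx (CAB k x).
Definition Cbar k x : 'M[R]_(1, nx) :=
  - (Dbar k x *m pC S k.+2 *m A1 k x *m bold (pA S) k x).
Definition Gbar k x : 'cV[R]_1 :=
  - (Dbar k x *m (pC S k.+2 *m A1 k x *m bold (pF S) k x
                  + pC S k.+2 *m F1 k x + pG S k.+2)).
Definition Abar k x : 'M[R]_nx := bold (pA S) k x + bold (pB S) k x *m Cbar k x.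
Definition Bbar k x : 'M[R]_(nx, 1) := bold (pB S) k x *m Dbar k x.
Definition Fbar k x : 'cV[R]_nx := bold (pF S) k x + bold (pB S) k x *m Gbar k x.

End PWA.

(* Main.v *)
Require Import Defs.
From HB Require Import structures.
From mathcomp Require Import all_boot all_order all_algebra.
Import Order.TTheory GRing.Theory Num.Theory.
Local Open Scope ring_scope.

Lemma bold_at (R : realFieldType) (Q : finType) (nx nP : nat)
    (S : pwa R Q nx nP) a b (M : Q -> nat -> 'M[R]_(a, b)) k x q0 :
  locations_partition S -> K S q0 (delta S x) -> bold S M k x = M q0 k.
Proof.
move=> Hp Hq; rewrite /bold (bigD1 q0) //= Hq scale1r big1 ?addr0 //.
move=> q Hq'; case Hk: (K S q (delta S x)); last by rewrite scale0r.
have [q1 [_ Hu]] := Hp x.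
have e1 := Hu _ Hq; have e2 := Hu _ Hk.
by move: Hq'; rewrite -e1 e2 eqxx.
Qed.

Arguments bold_at {R Q nx nP S a b M k x q0}.

Lemma bold_delta (R : realFieldType) (Q : finType) (nx nP : nat)
    (S : pwa R Q nx nP) a b (M : Q -> nat -> 'M[R]_(a, b)) k x x' :
  delta S x = delta S x' -> bold S M k x = bold S M k x'.
Proof. by move=> e; rewrite /bold e. Qed.

Arguments bold_delta {R Q nx nP S a b} M {k x x'}.

Lemma zmod_aux (V : zmodType) (X u Y : V) : u = - X + (X + u + Y) + - Y.
Proof. by rewrite addrA addrK addKr. Qed.

Lemma unit11 (R : realFieldType) (M : 'M[R]_1) : M != 0 -> M \in unitmx.
Proof.
move=> H; rewrite unitmxE det_mx11 unitfE; apply: contra H => /eqP H.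
by apply/eqP/matrixP => i j; rewrite !ord1 H mxE.
Qed.

Theorem corollary2 (R : realFieldType) (Q : finType) (nx nP : nat)
    (S : pwa R Q nx nP) (x0 : 'cV[R]_nx)
    (C : 'M[R]_(1, nx)) (G : 'cV[R]_1) (Po : 'M[R]_(nP, 1)) (thetao : 'cV[R]_nP) :
  locations_partition S ->
  (* (A1) *) reaches_all S x0 ->
  (* (A4) *) (exists muc : nat, forall (q : Q) (k : nat), comp_reldeg S q k muc) ->
  (* (A6) *) (forall k, pC S k = C) -> (forall k, pG S k = G) ->
  pP S = Po *m C -> ptheta S = thetao - Po *m G ->
  (* known global dynamical relative degree 2 *)
  glob_reldeg S 2 ->
  (* the location at time k+1 does not depend on u_k *)
  (forall (k : nat) (x : 'cV[R]_nx) (v : 'cV[R]_1),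
      delta S (step S k x v) = delta S (xpred S k x)) /\
  (* the inverse system reproduces input and state from x_k and y_{k+2} *)
  (forall (x : nat -> 'cV[R]_nx) (u y : nat -> 'cV[R]_1),
      x 0%N = x0 -> is_traj S x u y ->
      forall k : nat,
        CAB S k (x k) \in unitmx /\
        u k = Cbar S k (x k) *m x k + Dbar S k (x k) *m y k.+2 + Gbar S k (x k) /\
        x k.+1 = Abar S k (x k) *m x k + Bbar S k (x k) *m y k.+2 + Fbar S k (x k)).
Proof.
move=> Hp _ [muc Hmuc] HC HG HP Hth [Hg2 Hglow].
have [q0 _] := Hp 0.
have loc : forall x, exists q, K S q (delta S x).
  by move=> x; have [q [Hq _]] := Hp x; exists q.
have Hm2 : muc = 2%N.
  case: muc Hmuc => [|[|[|m]]] Hm //.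
  - exfalso; apply: (Hglow 0%N) => // k s.
    by have [H _] := Hm q0 k.
  - exfalso; apply: (Hglow 1%N) => // k s.
    by have [H _] := Hm (s k) k.
  - have [_ H] := Hm q0 0%N.
    by have := H 2%N isT; move: (Hg2 0%N (fun _ => q0)) => /eqP.
move: Hmuc; rewrite Hm2 => Hmuc.
have CB0 : forall q k, C *m pB S q k = 0.
  move=> q k; have [_ H] := Hmuc q k; have := H 1%N isT.
  by rewrite /markov /= HC mulmx1.
have D0 : forall k, pD S k = 0.
  by move=> k; have [_ H] := Hmuc q0 k; have := H 0%N isT.
have CbB0 : forall k x, C *m bold S (pB S) k x = 0.
  move=> k x; have [q Hq] := loc x; by rewrite (bold_at Hp Hq) CB0.
have Hdel : forall (k : nat) (x : 'cV[R]_nx) (v : 'cV[R]_1),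
      delta S (step S k x v) = delta S (xpred S k x).
  move=> k x v; rewrite /delta HP.
  have -> : Po *m C *m step S k x v = Po *m C *m xpred S k x.
    rewrite /step /xpred -!mulmxA !mulmxDr.
    rewrite (mulmxA C (bold S (pB S) k x)) CbB0 mul0mx mulmx0 addr0.
    by [].

  done.
split => // x u y _ Htr k.
have [Hx1 _] := Htr k.
have [Hx2 Hy2] := Htr k.+1.+1.
have [Hx2' _] := Htr k.+1.
set a := bold S (pA S) k (x k); set b := bold S (pB S) k (x k).
set f := bold S (pF S) k (x k).
have Hs1 : x k.+1 = a *m x k + b *m u k + f by rewrite Hx1.
have Hd1 : delta S (x k.+1) = delta S (xpred S k (x k)) by rewrite Hx1 Hdel.
have Hunit : CAB S k (x k) \in unitmx.
  apply: unit11.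
  have [q1 Hq1] := loc (x k); have [q2 Hq2] := loc (xpred S k (x k)).
  have := Hg2 k (fun i => if i == k then q1 else q2).
  rewrite /markov /= eqxx.
  have -> : (k + 1 == k)%N = false by rewrite addn1 eqn_leq ltnn.
  rewrite /CAB /A1 (bold_at Hp Hq2) (bold_at Hp Hq1) mulmx1.
  by rewrite addn1 addn2.
have Hy : y k.+2 = (C *m A1 S k (x k) *m a) *m x k + CAB S k (x k) *m u k
     + (C *m A1 S k (x k) *m f + C *m F1 S k (x k) + G).
  rewrite Hy2 /output D0 mul0mx addr0 HC HG Hx2' /step.
  rewrite (bold_delta (pA S) Hd1) (bold_delta (pF S) Hd1).
  rewrite -/(A1 S k (x k)) -/(F1 S k (x k)) Hs1 /CAB.
  rewrite !mulmxDr (mulmxA C (bold S (pB S) _ _)) CbB0 mul0mx addr0 HC -/b !mulmxA !addrA.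
  done.
have Hu : u k = Cbar S k (x k) *m x k + Dbar S k (x k) *m y k.+2 + Gbar S k (x k).
  rewrite Hy /Cbar /Gbar /Dbar HC HG; set M := CAB S k (x k).
  rewrite !mulNmx !mulmxDr (mulmxA (invmx M) M) mulVmx // mul1mx !mulmxA; apply: zmod_aux.
split => //; split => //.
rewrite Hs1 {1}Hu /Abar /Bbar /Fbar -/a -/b -/f !mulmxDr !mulmxDl !mulmxA.
by rewrite !addrA [RHS]addrAC.
Qed.
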